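(* Let $\phi:X\to Y$ be a continuous surjection from a compact metric space $X$ onto a compact Hausdorff space $Y$. Then $\phi$ is almost one-to-one if and only if $\phi$ is both almost open and weakly almost one-to-one.
   Context: $\phi$ is almost open if $\phi(U)$ has nonempty interior in $Y$ for every nonempty open $U\subset X$. Let $Y_0=\{y\in Y:\phi^{-1}(y)\text{ is a singleton}\}$. $\phi$ is weakly almost one-to-one if $Y_0$ is dense in $Y$, and almost one-to-one if $X_0=\phi^{-1}(Y_0)$ is dense in $X$. *)

(* Defs.v *)
From HB Require Import structures.
From mathcomp Require Import all_boot all_order all_algebra.
From mathcomp Require Import all_classical all_reals all_analysis.
Set Implicit Arguments. Unset Strict Implicit. Unset Printing Implicit Defensive.
Import Order.TTheory GRing.Theory Num.Theory.
Local Open Scope classical_set_scope.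

Definition almost_open (X Y : topologicalType) (phi : X -> Y) : Prop :=
  forall U : set X, open U -> U !=set0 -> (interior (phi @` U)) !=set0.

Definition singleton_fibres (X Y : topologicalType) (phi : X -> Y) : set Y :=
  [set y | exists x : X, phi @^-1` [set y] = [set x]].

Definition weakly_almost_one_to_one (X Y : topologicalType) (phi : X -> Y) : Prop :=
  dense (singleton_fibres phi).

Definition almost_one_to_one (X Y : topologicalType) (phi : X -> Y) : Prop :=
  dense (phi @^-1` singleton_fibres phi).

(* Main.v *)
Require Import Defs.
From HB Require Import structures.
From mathcomp Require Import all_boot all_order all_algebra.
From mathcomp Require Import all_classical all_reals all_analysis.
Local Open Scope classical_set_scope.

Theorem proposition2p3 (R : realType) (X : pseudoMetricType R) (Y : topologicalType)
  (phi : X -> Y) :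
  hausdorff_space X -> compact [set: X] ->
  hausdorff_space Y -> compact [set: Y] ->
  continuous phi -> (forall y : Y, exists x : X, phi x = y) ->
  almost_one_to_one phi <-> (almost_open phi /\ weakly_almost_one_to_one phi).
Proof.
move=> hX cX hY cY cphi surj; split.
- move=> ao; split.
  + move=> U oU U0.
    have [x [Ux [x0 Hx0]]] := ao U U0 oU.
    have xx0 : x = x0.
      by have : (phi @^-1` [set phi x]) x by []; rewrite Hx0.
    subst x0.
    set C := phi @` (~` U).
    have cC : closed C.
      apply: (compact_closed hY); apply: continuous_compact.
        exact: continuous_subspaceT.
      apply: (subclosed_compact (open_closedC oU) cX) => //.
    exists (phi x).
    have sub : ~` C `<=` phi @` U.
      move=> y nCy; have [z zy] := surj y.
      exists z => //; apply: contrapT => nUz; apply: nCy; by exists z.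
    rewrite /interior /=; apply: (filterS sub); apply: open_nbhs_nbhs; split.
      exact: closed_openC.
    move=> [z nUz zx]; apply: nUz.
    have : (phi @^-1` [set phi x]) z by [].
    by rewrite Hx0 => ->.
  + move=> O O0 oO.
    have [y Oy] := O0; have [x xy] := surj y.
    have Ox : (phi @^-1` O) x by rewrite /= xy.
    have [z [Oz Sz]] := ao (phi @^-1` O) (ex_intro _ x Ox) (open_comp (fun t _ => cphi t) oO).
    by exists (phi z).
- move=> [aop wao] U U0 oU.
  have oI : open (interior (phi @` U)) by exact: open_interior.
  have [y [Iy [x Hx]]] := wao _ (aop U oU U0) oI.
  have : (phi @` U) y by exact: interior_subset.
  case=> u Uu uy.
  exists u; split => //=; exists x.
  by rewrite uy.
Qed.
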